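(* Let $M=(W,\bm{\Box},V)$ be a transitive, monotonic and regular neighborhood model, $\Sigma$ a set of formulas closed under subformulas, and $M^{T}_f$ the transitive filtration of $M$ through $\Sigma$. Then $M^{T\bullet}_f=(W_f,\bm{\Box}^{T\bullet}_f,V_f)$ is a filtration of $M$ through $\Sigma$, i.e. $\bm{\Box}^{T\bullet}_f\widetilde{|\varphi|}_M=\widetilde{|\Box\varphi|}_M$ for every formula $\Box\varphi\in\Sigma$.
   Context: A neighborhood model is $M=(W,\bm{\Box},V)$ with $W\neq\varnothing$, $\bm{\Box}:\mathcal P(W)\to\mathcal P(W)$, $V:Var\to\mathcal P(W)$; truth sets: $|p|_M=V(p)$, $|\neg\varphi|_M=W\setminus|\varphi|_M$, $|\varphi\wedge\psi|_M=|\varphi|_M\cap|\psi|_M$, $|\Box\varphi|_M=\bm{\Box}|\varphi|_M$. $M$ is transitive if $\bm{\Box}X\subseteq\bm{\Box}\bm{\Box}X$, monotonic if $X\subseteq Y\Rightarrow\bm{\Box}X\subseteq\bm{\Box}Y$, regular if $\bm{\Box}X\cap\bm{\Box}Y\subseteq\bm{\Box}(X\cap Y)$, for all $X,Y\subseteq W$. For $\Sigma$ closed under subformulas, $w\sim v$ iff $w,v$ satisfy the same formulas of $\Sigma$; $\widetilde w$ is the class of $w$, $W_f=\{\widetilde w:w\in W\}$, $\widetilde X=\{\widetilde w:w\in X\}$, $V_f(p)=\widetilde{|p|}_M$. A filtration of $M$ through $\Sigma$ is a model $(W_f,\bm{\Box}_f,V_f)$ with $\bm{\Box}_f\widetilde{|\varphi|}_M=\widetilde{|\Box\varphi|}_M$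 whenever $\Box\varphi\in\Sigma$. The minimal filtration has $\bm{\Box}^{-}_fX=\widetilde{|\Box\varphi|}_M$ if $X=\widetilde{|\varphi|}_M$ for some formula $\Box\varphi\in\Sigma$, and $\varnothing$ otherwise. For a function $\bm{\Box}':\mathcal P(U)\to\mathcal P(U)$: $\widehat{\bm{\Box}'}X=X$ if $X=\bm{\Box}'Y$ for some $Y$, else $\varnothing$; $\bm{\Box}'^{\#}X=\bigcup\{\bm{\Box}'Y:Y\subseteq X\}$; $\bm{\Box}'^{*}X=\bigcup\{\bm{\Box}'X_1\cap\dots\cap\bm{\Box}'X_n:n\ge1,\ X=X_1\cap\dots\cap X_n\}$; $\bm{\Box}'^{\bullet}=\bm{\Box}'^{*\#}$. The transitive filtration has $\bm{\Box}^{T}_fX=\bm{\Box}^{-}_fX\cup\widehat{\bm{\Box}^{-}_f}X$, and $\bm{\Box}^{T\bullet}_f=(\bm{\Box}^{T}_f)^{\bullet}$. *)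

(* Defs.v *)
From Stdlib Require Import List.
Import ListNotations.

Definition pset (T : Type) := T -> Prop.
Definition subset {T} (X Y : pset T) : Prop := forall x, X x -> Y x.
Definition cap {T} (X Y : pset T) : pset T := fun x => X x /\ Y x.
Definition cup {T} (X Y : pset T) : pset T := fun x => X x \/ Y x.
Definition compl {T} (X : pset T) : pset T := fun x => ~ X x.

Inductive form : Type :=
| Var : nat -> form
| Neg : form -> form
| And : form -> form -> form
| Box : form -> form.

(* Neighborhood model (W, Box, V); nonemptiness of W is a separate hypothesis. *)
Record nmodel := {
  carrier : Type;
  nbox : pset carrier -> pset carrier;
  val : nat -> pset carrier }.

Fixpoint truth (M : nmodel) (f : form) : pset (carrier M) :=
  match f with
  | Var p => val M p
  | Neg g => compl (truth M g)
  | And g h => cap (truth M g) (truth M h)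
  | Box g => nbox M (truth M g)
  end.

Definition transitive_model (M : nmodel) : Prop :=
  forall X, subset (nbox M X) (nbox M (nbox M X)).
Definition monotonic_model (M : nmodel) : Prop :=
  forall X Y, subset X Y -> subset (nbox M X) (nbox M Y).
Definition regular_model (M : nmodel) : Prop :=
  forall X Y, subset (cap (nbox M X) (nbox M Y)) (nbox M (cap X Y)).

Definition subform_closed (Sigma : pset form) : Prop :=
  (forall g, Sigma (Neg g) -> Sigma g) /\
  (forall g h, Sigma (And g h) -> Sigma g /\ Sigma h) /\
  (forall g, Sigma (Box g) -> Sigma g).

Section Filtration.
Variables (M : nmodel) (Sigma : pset form).

Definition sim (w v : carrier M) : Prop :=
  forall f, Sigma f -> (truth M f w <-> truth M f v).

Definition cls (w : carrier M) : pset (carrier M) := sim w.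

Definition Wf : Type := { C : pset (carrier M) | exists w, C = cls w }.

Definition tilde (X : pset (carrier M)) : pset Wf :=
  fun c => exists w, X w /\ proj1_sig c = cls w.

Definition Vf (p : nat) : pset Wf := tilde (val M p).

Definition box_min (X : pset Wf) : pset Wf :=
  fun c => exists f, Sigma (Box f) /\ X = tilde (truth M f) /\
                     tilde (truth M (Box f)) c.

End Filtration.

Section Ops.
Variables (U : Type) (bx : pset U -> pset U).

Definition box_hat (X : pset U) : pset U :=
  fun u => (exists Y, X = bx Y) /\ X u.

Definition box_sharp (X : pset U) : pset U :=
  fun u => exists Y, subset Y X /\ bx Y u.

Definition bigcap_list (Xs : list (pset U)) : pset U :=
  fun u => Forall (fun Y => Y u) Xs.

Definition box_star (X : pset U) : pset U :=
  fun u => exists Xs : list (pset U), Xs <> [] /\ X = bigcap_list Xs /\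
           Forall (fun Y => bx Y u) Xs.
End Ops.

Definition box_bullet {U} (bx : pset U -> pset U) : pset U -> pset U :=
  box_sharp U (box_star U bx).

Definition box_T (M : nmodel) (Sigma : pset form) (X : pset (Wf M Sigma)) :=
  cup (box_min M Sigma X) (box_hat (Wf M Sigma) (box_min M Sigma) X).

Definition box_T_bullet (M : nmodel) (Sigma : pset form) : pset (Wf M Sigma) -> pset (Wf M Sigma) :=
  box_bullet (box_T M Sigma).

Definition is_filtration (M : nmodel) (Sigma : pset form)
  (bx : pset (Wf M Sigma) -> pset (Wf M Sigma)) : Prop :=
  forall f, Sigma (Box f) ->
    bx (tilde M Sigma (truth M f)) = tilde M Sigma (truth M (Box f)).

(* Main.v *)
Require Import Defs.
From Stdlib Require Import List FunctionalExtensionality PropExtensionality.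
Import ListNotations.

Section Proof.
Variables (M : nmodel) (Sigma : pset form).
Hypothesis HS : subform_closed Sigma.

Definition mk (v : carrier M) : Wf M Sigma :=
  exist _ (cls M Sigma v) (ex_intro _ v eq_refl).

Lemma cls_eq_sim w v : cls M Sigma w = cls M Sigma v -> sim M Sigma w v.
Proof.
  intro H. assert (Hv : cls M Sigma v v) by (intros f _; tauto).
  rewrite <- H in Hv. exact Hv.
Qed.

Lemma tilde_sigma g : Sigma g -> forall w (c : Wf M Sigma), proj1_sig c = cls M Sigma w ->
  (tilde M Sigma (truth M g) c <-> truth M g w).
Proof.
  intros Hg w c Hc; split.
  - intros [w' [Hw' Hc']]. rewrite Hc in Hc'. apply cls_eq_sim in Hc'.
    apply (Hc' g Hg); auto.
  - intro H. exists w; auto.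
Qed.

Lemma tilde_mk g v : Sigma g -> (tilde M Sigma (truth M g) (mk v) <-> truth M g v).
Proof. intro Hg. apply tilde_sigma; auto. Qed.

Lemma tilde_inj g g' : Sigma g -> Sigma g' ->
  tilde M Sigma (truth M g) = tilde M Sigma (truth M g') -> truth M g = truth M g'.
Proof.
  intros Hg Hg' H. extensionality w. apply propositional_extensionality.
  rewrite <- (tilde_mk g w Hg), <- (tilde_mk g' w Hg'), H. tauto.
Qed.

Lemma box_min_tilde g : Sigma (Box g) ->
  box_min M Sigma (tilde M Sigma (truth M g)) = tilde M Sigma (truth M (Box g)).
Proof.
  destruct HS as [_ [_ HB]].
  intro Hg. extensionality d. apply propositional_extensionality. split.
  - intros [g' [Hg' [E Hd]]]. apply tilde_inj in E; auto.
    simpl. rewrite E. exact Hd.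
  - intro Hd. exists g. auto.
Qed.

Lemma reg_list (Hreg : regular_model M) w : forall Xs,
  Forall (fun X => exists h, Sigma h /\ X = tilde M Sigma (truth M h) /\ nbox M (truth M h) w) Xs ->
  Xs = [] \/ exists P, nbox M P w /\ forall v, P v -> bigcap_list _ Xs (mk v).
Proof.
  induction 1 as [|X Xs [h [Hh [E Hw]]] HF IH]; [left; auto|right].
  destruct IH as [->|[P [HP HPv]]].
  - exists (truth M h). split; auto. intros v Hv. constructor; [|constructor].
    subst X. apply tilde_mk; auto.
  - exists (cap (truth M h) P). split.
    + apply Hreg. split; auto.
    + intros v [Hv1 Hv2]. constructor; [|apply HPv; auto].
      subst X. apply tilde_mk; auto.
Qed.

End Proof.

Theorem mainTheorem12 (M : nmodel) (Sigma : pset form) :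
  inhabited (carrier M) ->
  transitive_model M -> monotonic_model M -> regular_model M ->
  subform_closed Sigma ->
  is_filtration M Sigma (box_T_bullet M Sigma).
Proof.
  intros _ Htr Hmon Hreg HS f Hf.
  pose proof HS as [_ [_ HB]].
  extensionality c. apply propositional_extensionality. split.
  - intros [Y [HY [Xs [Hne [EY HXs]]]]].
    assert (Hrep : exists w, proj1_sig c = cls M Sigma w) by (destruct c as [C [w Hw]]; exists w; exact Hw).
    destruct Hrep as [w Hw].
    assert (HF : Forall (fun X => exists h, Sigma h /\ X = tilde M Sigma (truth M h)
                    /\ nbox M (truth M h) w) Xs).
    { eapply Forall_impl; [|exact HXs]. intros X HX. simpl in HX.
      destruct HX as [[g [Hg [EX Hc]]] | [[Z EZ] HXc]].
      - exists g. split; [apply HB; auto|]. split; auto.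
        apply (tilde_sigma M Sigma (Box g) Hg w _ Hw) in Hc. exact Hc.
      - rewrite EZ in HXc. destruct HXc as [g [Hg [EZ' Hc]]].
        subst Z. rewrite box_min_tilde in EZ; auto.
        exists (Box g). split; auto. split; auto.
        apply (tilde_sigma M Sigma (Box g) Hg w _ Hw) in Hc.
        simpl in Hc |- *. apply Htr. exact Hc. }
    destruct (reg_list M Sigma Hreg w Xs HF) as [E|[P [HP HPv]]]; [contradiction|].
    apply (tilde_sigma M Sigma (Box f) Hf w _ Hw). simpl.
    apply (Hmon P). 2: exact HP.
    intros v Hv. apply (tilde_mk M Sigma f v (HB _ Hf)).
    apply HY. rewrite EY. apply HPv; auto.
  - intro Hc. exists (tilde M Sigma (truth M f)). split; [intros x; auto|].
    exists [tilde M Sigma (truth M f)]. split; [discriminate|]. split.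
    + extensionality d. apply propositional_extensionality. unfold bigcap_list. split.
      * intro; constructor; auto.
      * intro H; inversion H; auto.
    + constructor; [|constructor]. left. exists f. auto.
Qed.
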